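(* Let $l,t,s,n$ be integers with $3\leq l\leq t$, $s\geq l+1$ and $n\geq 2\binom{3s}{2}$. Then $$ex(n,\{K_{l,t},M_{s+1}\})\leq (t-1)\binom{s}{l}+(l-1)n-\frac{l(l-1)}{2}+ex(2(s-l)+1,K_{l,t}).$$
   Context: All graphs are finite and simple. $ex(n,\mathscr{F})$ is the maximum number of edges of an $n$-vertex graph containing no member of $\mathscr{F}$ as a subgraph, and $ex(m,K_{l,t})=ex(m,\{K_{l,t}\})$. $K_{l,t}$ is the complete bipartite graph with parts of sizes $l,t$; $M_{s+1}$ is the matching of $s+1$ disjoint edges. *)

(* Defs.v *)
From mathcomp Require Import all_boot.
Set Implicit Arguments. Unset Strict Implicit. Unset Printing Implicit Defensive.

Definition simple_graph (n : nat) (E : {set 'I_n * 'I_n}) : bool :=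
  [forall x : 'I_n, forall y : 'I_n, ((x, y) \in E) == ((y, x) \in E)]
  && [forall x : 'I_n, (x, x) \notin E].

Definition nedges (n : nat) (E : {set 'I_n * 'I_n}) : nat :=
  #|[set p in E | (p.1 < p.2)%N]|.

Record pattern := Pattern { pv : nat; pe : rel 'I_pv }.

Definition contains (n : nat) (E : {set 'I_n * 'I_n}) (H : pattern) : bool :=
  [exists f : {ffun 'I_(pv H) -> 'I_n},
     injectiveb f &&
     [forall x, forall y, pe x y ==> ((f x, f y) \in E)]].

Definition ex (n : nat) (F : seq pattern) : nat :=
  \max_(E : {set 'I_n * 'I_n} | simple_graph E && all (fun H => ~~ contains E H) F)
     nedges E.

Definition Kbip (l t : nat) : pattern :=
  @Pattern (l + t) (fun i j : 'I_(l + t) => (i < l)%N != (j < l)%N).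

(* M_k: matching of k disjoint edges {2i, 2i+1}, i < k. *)
Definition Mmatch (k : nat) : pattern :=
  @Pattern (k.*2) (fun i j : 'I_(k.*2) => (i./2 == j./2) && (i != j)).

(* Main.v *)
Require Import Defs.
From mathcomp Require Import all_boot.
From mathcomp Require Import zify.
Set Implicit Arguments. Unset Strict Implicit. Unset Printing Implicit Defensive.

Lemma card_sum (T : finType) (A : {pred T}) : #|A| = \sum_(x : T) (x \in A).
Proof. by rewrite -sum1_card big_mkcond /=; apply: eq_bigr => x _; case: (x \in A). Qed.

Lemma binom_lin d l : 0 < l -> d <= (l - 1) + 'C(d, l).
Proof.
case: l => // l _; rewrite subSS subn0.
elim: d => // d IH; rewrite binS.
case: (ltnP d l) => h; first by lia.
have : 0 < 'C(d, l) by rewrite bin_gt0.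
lia.
Qed.

Section Graph.
Variable n : nat.
Variable E : {set 'I_n * 'I_n}.
Hypothesis Esym : forall x y, ((x,y) \in E) = ((y,x) \in E).
Hypothesis Eirr : forall x, (x,x) \notin E.
Definition Nb x := [set y | (x,y) \in E].
Definition arcs (S1 S2 : {set 'I_n}) := #|[set p in E | (p.1 \in S1) && (p.2 \in S2)]|.

Lemma arcs_sum S1 S2 : arcs S1 S2 = \sum_(v in S1) #|Nb v :&: S2|.
Proof.
rewrite /arcs card_sum.
transitivity (\sum_(v : 'I_n) \sum_(u : 'I_n) ((v \in S1) && (u \in Nb v :&: S2))).
  rewrite pair_big /=; apply: eq_bigr => -[a b] _ /=.
  by rewrite !inE /=; case: ((a,b) \in E); case: (a \in S1); case: (b \in S2).
rewrite [RHS]big_mkcond /=; apply: eq_bigr => v _.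
case: (v \in S1) => /=; first by rewrite card_sum.
by rewrite big1.
Qed.

Lemma arcs_sym S1 S2 : arcs S1 S2 = arcs S2 S1.
Proof.
rewrite /arcs -(card_imset _ (@inv_inj _ (fun p : 'I_n * 'I_n => (p.2, p.1)) _)); last by case.
apply: eq_card => -[a b]; rewrite !inE /=.
apply/imsetP/idP.
  by case=> -[c d]; rewrite inE /= => /andP[H1 /andP[H2 H3]] [-> ->]; rewrite -Esym H1 H2 H3.
move=> /andP[H1 /andP[H2 H3]]; exists (b,a) => //.
by rewrite inE /= Esym H1 H2 H3.
Qed.

Lemma nedges_arcs : nedges E * 2 = #|E|.
Proof.
rewrite /nedges.
have -> : #|E| = #|[set p in E | p.1 < p.2]| + #|[set p in E | p.2 < p.1]|.
  have -> : #|E| = #|[set p in E | p.1 < p.2] :|: [set p in E | p.2 < p.1]|.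
    apply: eq_card => -[a b]; rewrite !inE /=.
    case: (ltngtP a b) => h; rewrite ?andbF ?andbT ?orbF //.
    have -> : a = b by apply: val_inj.
    by rewrite (negbTE (Eirr _)).
  rewrite cardsU (_ : _ :&: _ = set0) ?cards0 ?subn0 //.
  apply/setP => -[a b]; rewrite !inE /=.
  by case: ltngtP; rewrite !andbF.
have -> : #|[set p in E | p.2 < p.1]| = #|[set p in E | p.1 < p.2]|.
  rewrite -(card_imset _ (@inv_inj _ (fun p : 'I_n * 'I_n => (p.2, p.1)) _)); last by case.
  apply: eq_card => -[a b]; rewrite !inE /=.
  apply/imsetP/idP.
    by case=> -[c d]; rewrite inE /= => /andP[H1 H2] [-> ->]; rewrite -Esym H1 H2.
  by move=> /andP[H1 H2]; exists (b,a) => //; rewrite inE /= -Esym H1 H2.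
by rewrite muln2 addnn.
Qed.

Definition CN (L : {set 'I_n}) := [set v | L \subset Nb v].

Lemma nth_enum_in (x0 : 'I_n) (A : {set 'I_n}) k : k < #|A| -> nth x0 (enum A) k \in A.
Proof. by move=> h; rewrite -mem_enum mem_nth // -cardE. Qed.

Lemma nth_enum_inj (x0 : 'I_n) (A : {set 'I_n}) i j : i < #|A| -> j < #|A| ->
  nth x0 (enum A) i = nth x0 (enum A) j -> i = j.
Proof. by move=> hi hj /eqP; rewrite nth_uniq ?enum_uniq // -?cardE // => /eqP. Qed.

Lemma CN_small (x0 : 'I_n) l t (L : {set 'I_n}) :
  ~~ contains E (Kbip l t) -> #|L| = l -> #|CN L| < t.
Proof.
move=> nK hL; rewrite ltnNge; apply/negP => ht; move/negP: nK; apply.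
pose f := fun i : 'I_(l + t) => if i < l then nth x0 (enum L) i else nth x0 (enum (CN L)) (i - l).
have fL : forall i : 'I_(l+t), i < l -> f i \in L.
  by move=> i hi; rewrite /f hi nth_enum_in // hL.
have fC : forall i : 'I_(l+t), ~~ (i < l) -> f i \in CN L.
  move=> i hi; rewrite /f (negbTE hi) nth_enum_in //.
  by apply: leq_trans ht; have := ltn_ord i; move: hi; rewrite -leqNgt; lia.
have disj : forall v, v \in CN L -> v \in L -> False.
  move=> v; rewrite inE => /subsetP h /h; rewrite inE.
  by rewrite (negbTE (Eirr v)).
apply/existsP; exists [ffun i => f i]; apply/andP; split.
  apply/injectiveP => i j; rewrite !ffunE => eq.
  apply: val_inj => /=.
  case: (boolP (i < l)) => hi; case: (boolP (j < l)) => hj.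
  - by move: eq; rewrite /f hi hj; apply: nth_enum_inj; rewrite hL.
  - by exfalso; apply: (disj (f i)); [rewrite eq; exact: fC|exact: fL].
  - by exfalso; apply: (disj (f j)); [rewrite -eq; exact: fC|exact: fL].
  - move: eq; rewrite /f (negbTE hi) (negbTE hj) => /nth_enum_inj.
    have := ltn_ord i; have := ltn_ord j; move: hi hj; rewrite -!leqNgt => hi hj hi' hj' h.
    change (pv (Kbip l t)) with (l + t) in *.
    move: h ht hi hj hi' hj'; clear; set c := #|CN L|; set a := nat_of_ord i; set b := nat_of_ord j.
    move=> h ht hi hj hi' hj'.
    have : a - l = b - l by apply: h; lia.
    lia.
apply/forallP => x; apply/forallP => y; apply/implyP; rewrite ffunE ffunE /=.
case: (boolP (x < l)) => hx; case: (boolP (y < l)) => hy //= _.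
  have := fC _ hy; rewrite inE => /subsetP /(_ _ (fL _ hx)); rewrite inE.
  by rewrite Esym.
have := fC _ hx; rewrite inE => /subsetP /(_ _ (fL _ hy)); rewrite inE.
done.
Qed.
Lemma count_lsets l t (W : {set 'I_n}) :
  (forall L : {set 'I_n}, #|L| = l -> #|CN L| < t) ->
  \sum_(v : 'I_n) 'C(#|Nb v :&: W|, l) <= (t - 1) * 'C(#|W|, l).
Proof.
move=> hCN.
have e1 : forall v, 'C(#|Nb v :&: W|, l) =
   \sum_(A : {set 'I_n}) ((A \subset Nb v :&: W) && (#|A| == l)).
  by move=> v; rewrite -cards_draws card_sum; apply: eq_bigr => A _; rewrite inE.
rewrite (eq_bigr _ (fun v _ => e1 v)) exchange_big /=.
rewrite -cards_draws card_sum big_distrr /=.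
apply: leq_sum => A _; rewrite inE.
case: (boolP ((A \subset W) && (#|A| == l))) => [/andP[AW /eqP Al]|hA].
  rewrite muln1.
  suff -> : \sum_(v : 'I_n) ((A \subset Nb v :&: W) && (#|A| == l)) = #|CN A| by move: (hCN A Al); lia.
  transitivity (\sum_(v : 'I_n) (v \in CN A)); last by rewrite card_sum.
  by apply: eq_bigr => v _; rewrite subsetI AW Al eqxx inE !andbT.
rewrite /= muln0 big1 // => v _.
case: (boolP ((A \subset Nb v :&: W) && (#|A| == l))) => // /andP[h1 h2].
by move: hA; rewrite h2 andbT; move: h1; rewrite subsetI => /andP[_ ->].
Qed.

Definition valid (A : {set 'I_n}) (m : {ffun 'I_n -> 'I_n}) :=
  [forall x, (m x != x) ==> [&& m (m x) == x, (x, m x) \in E & x \in A]].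
Definition msize (m : {ffun 'I_n -> 'I_n}) := #|[set x | m x != x]|.

Lemma msizeE m : msize m = #|[set x | m x != x]|.
Proof. by []. Qed.

Lemma validP (A : {set 'I_n}) (m : {ffun 'I_n -> 'I_n}) : reflect (forall x, m x != x -> [/\ m (m x) = x, (x, m x) \in E & x \in A]) (valid A m).
Proof.
apply: (iffP forallP) => h x.
  by move=> hx; move: (h x); rewrite hx /= => /and3P[/eqP -> -> ->].
by apply/implyP => /h [-> -> ->]; rewrite eqxx.
Qed.

Lemma valid_inv (A : {set 'I_n}) (m : {ffun 'I_n -> 'I_n}) : valid A m -> forall x, m (m x) = x.
Proof.
move=> /validP h x; case: (eqVneq (m x) x) => [e|ne]; first by rewrite !e.
by case: (h x ne).
Qed.

Lemma valid_inj (A : {set 'I_n}) (m : {ffun 'I_n -> 'I_n}) : valid A m -> injective m.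
Proof. by move=> v; apply: (can_inj (valid_inv v)). Qed.

Lemma valid_sub (A A' : {set 'I_n}) (m : {ffun 'I_n -> 'I_n}) : A \subset A' -> valid A m -> valid A' m.
Proof.
move=> /subsetP s /validP h; apply/validP => x /h [h1 h2 h3].
by split => //; apply: s.
Qed.

Lemma valid_A (A : {set 'I_n}) (m : {ffun 'I_n -> 'I_n}) x : valid A m -> m x != x -> x \in A.
Proof. by move=> /validP h /h []. Qed.

Lemma valid_E (A : {set 'I_n}) (m : {ffun 'I_n -> 'I_n}) x : valid A m -> m x != x -> (x, m x) \in E.
Proof. by move=> /validP h /h []. Qed.

Lemma mate_matched (A : {set 'I_n}) (m : {ffun 'I_n -> 'I_n}) x : valid A m -> m x != x -> m (m x) != m x.
Proof. by move=> v hx; rewrite (valid_inv v) eq_sym. Qed.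

Lemma neq_of_E x y : (x, y) \in E -> x != y.
Proof. by apply: contraL => /eqP ->; apply: Eirr. Qed.

Lemma aug1 (A : {set 'I_n}) (m : {ffun 'I_n -> 'I_n}) x y : valid A m -> m x = x -> m y = y -> (x, y) \in E -> x \in A -> y \in A ->
  exists m', [/\ valid A m', msize m' = msize m + 2 & forall z, z != x -> z != y -> m' z = m z].
Proof.
move=> v mx my exy xA yA.
have nxy := neq_of_E exy.
pose m' := [ffun z => if z == x then y else if z == y then x else m z].
have m'x : m' x = y by rewrite ffunE eqxx.
have m'y : m' y = x by rewrite ffunE eq_sym (negbTE nxy) eqxx.
have m'z : forall z, z != x -> z != y -> m' z = m z.
  by move=> z h1 h2; rewrite ffunE (negbTE h1) (negbTE h2).
exists m'; split => //.
- apply/validP => z.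
  case: (eqVneq z x) => [->|zx]; first by rewrite m'x m'y => _; split.
  case: (eqVneq z y) => [->|zy]; first by rewrite m'y m'x -Esym => _; split.
  rewrite m'z // => hz.
  have [h1 h2 h3] := (validP _ _ v) z hz.
  have mzx : m z != x by apply: contra zx => /eqP e; rewrite -h1 e mx.
  have mzy : m z != y by apply: contra zy => /eqP e; rewrite -h1 e my.
  by rewrite m'z // h1.
- rewrite !msizeE.
  have -> : [set z | m' z != z] = [set z | m z != z] :|: [set x; y].
    apply/setP => z; rewrite !inE.
    case: (eqVneq z x) => [->|zx]; first by rewrite m'x /= orbT eq_sym nxy.
    case: (eqVneq z y) => [->|zy]; first by rewrite m'y !orbT nxy.
    by rewrite m'z // !orbF.
  rewrite cardsU cards2 nxy.
  rewrite (_ : _ :&: _ = set0) ?cards0 ?subn0 //.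
  apply/setP => z; rewrite !inE.
  by case: (eqVneq z x) => [->|_]; [rewrite mx eqxx|case: (eqVneq z y) => [->|_]; [rewrite my eqxx|rewrite andbF]].
Qed.

Lemma aug2 (A : {set 'I_n}) (m : {ffun 'I_n -> 'I_n}) x y a c : valid A m -> m x = y -> y != x ->
  m a = a -> m c = c -> a != c ->
  (x, a) \in E -> (y, c) \in E -> a \in A -> c \in A ->
  exists m', valid A m' /\ msize m' = msize m + 2.
Proof.
move=> v mxy yx ma mc nac exa eyc aA cA.
have my : m y = x by rewrite -mxy (valid_inv v).
have mx : m x != x by rewrite mxy.
have xa : x != a by apply/eqP => e; move: ma; rewrite -e mxy => e2; by rewrite e2 eqxx in yx.
have xc : x != c by apply/eqP => e; move: mc; rewrite -e mxy => e2; by rewrite e2 eqxx in yx.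
have ya : y != a by apply/eqP => e; have := my; rewrite e ma => ax; by rewrite e ax eqxx in yx.
have yc : y != c by apply/eqP => e; have := my; rewrite e mc => ax; by rewrite e ax eqxx in yx.
have xy : x != y by rewrite eq_sym.
pose m' := [ffun z => if z == x then a else if z == a then x else
                       if z == y then c else if z == c then y else m z].
have m'x : m' x = a by rewrite ffunE eqxx.
have m'a : m' a = x by rewrite ffunE eq_sym (negbTE xa) eqxx.
have m'y : m' y = c by rewrite ffunE (negbTE yx) (negbTE ya) eqxx.
have m'c : m' c = y.
  have cx : c != x by rewrite eq_sym.
  have ca : c != a by rewrite eq_sym.
  have cy : c != y by rewrite eq_sym.
  by rewrite ffunE (negbTE cx) (negbTE ca) (negbTE cy) eqxx.
have m'z : forall z, z != x -> z != a -> z != y -> z != c -> m' z = m z.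
  by move=> z h1 h2 h3 h4; rewrite ffunE (negbTE h1) (negbTE h2) (negbTE h3) (negbTE h4).
have vA : forall z, m z != z -> z \in A by move=> z; apply: valid_A v.
exists m'; split.
- apply/validP => z.
  case: (eqVneq z x) => [->|zx]; first by rewrite m'x m'a => _; split => //; apply: vA.
  case: (eqVneq z a) => [->|za]; first by rewrite m'a m'x -Esym => _; split.
  case: (eqVneq z y) => [->|zy]; first by rewrite m'y m'c => _; split => //; apply: vA; rewrite my eq_sym.
  case: (eqVneq z c) => [->|zc]; first by rewrite m'c m'y -Esym => _; split.
  rewrite m'z // => hz.
  have [h1 h2 h3] := (validP _ _ v) z hz.
  have mzx : m z != x by apply: contra zy => /eqP e; rewrite -h1 e mxy.
  have mzy : m z != y by apply: contra zx => /eqP e; rewrite -h1 e my.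
  have mza : m z != a by apply: contra za => /eqP e; rewrite -h1 e ma.
  have mzc : m z != c by apply: contra zc => /eqP e; rewrite -h1 e mc.
  by rewrite m'z // h1.
- rewrite !msizeE.
  have -> : [set z | m' z != z] = [set z | m z != z] :|: [set a; c].
    apply/setP => z; rewrite !inE.
    case: (eqVneq z x) => [->|zx]; first by rewrite m'x mx (eq_sym a) xa.
    case: (eqVneq z a) => [->|za]; first by rewrite m'a xa ?eqxx /= ?orbT.
    case: (eqVneq z y) => [->|zy]; first by rewrite m'y my (eq_sym x) yx (eq_sym c) yc.
    case: (eqVneq z c) => [->|zc]; first by rewrite m'c yc ?eqxx /= ?orbT.
    by rewrite m'z // !orbF.
  rewrite cardsU cards2 nac.
  rewrite (_ : _ :&: _ = set0) ?cards0 ?subn0 //.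
  apply/setP => z; rewrite !inE.
  by case: (eqVneq z a) => [->|_]; [rewrite ma eqxx|case: (eqVneq z c) => [->|_]; [rewrite mc eqxx|rewrite andbF]].
Qed.

Definition Rep (m : {ffun 'I_n -> 'I_n}) := [set x | (m x != x) && (x < m x)].

Lemma msize_Rep A m : valid A m -> msize m = #|Rep m|.*2.
Proof.
move=> v.
have inj := valid_inj v.
have inv := valid_inv v.
rewrite msizeE.
have -> : [set x | m x != x] = Rep m :|: [set m x | x in Rep m].
  apply/setP => z; rewrite !inE.
  apply/idP/idP.
    move=> hz; case: (ltngtP z (m z)) => h.
    - by rewrite hz.
    - apply/orP; right; apply/imsetP; exists (m z); last by rewrite inv.
      by rewrite inE inv h andbT; rewrite eq_sym.
    - by exfalso; move: hz; rewrite (_ : m z = z) ?eqxx //; apply: val_inj.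
  case/orP => [/andP[] //|/imsetP[x]]; rewrite inE => /andP[hx _] ->.
  by rewrite inv eq_sym.
rewrite cardsU card_imset // (_ : _ :&: _ = set0) ?cards0 ?subn0 -?addnn //.
apply/setP => z; rewrite !inE; apply/negbTE/negP => /andP[/andP[_ h1] /imsetP[x]].
rewrite inE => /andP[_ h2] e.
move: h1; rewrite e inv; move: h2; clear; lia.
Qed.

Lemma match_contains (x0 : 'I_n) A m k : valid A m -> k.*2 <= msize m -> contains E (Mmatch k).
Proof.
move=> v hk.
have inj := valid_inj v.
have inv := valid_inv v.
have kR : k <= #|Rep m| by move: hk; rewrite (msize_Rep v) leq_double.
pose g := fun i : nat => nth x0 (enum (Rep m)) (i./2).
pose f := fun i : 'I_(k.*2) => if odd i then m (g i) else g i.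
have gR : forall i : 'I_(k.*2), g i \in Rep m.
  move=> i; apply: nth_enum_in; apply: leq_trans kR.
  have := ltn_ord i; clear; rewrite -[X in X < _](odd_double_half i); case: (odd i) => /=; rewrite ?ltn_double; lia.
have gRP : forall i : 'I_(k.*2), (m (g i) != g i) && (g i < m (g i)).
  by move=> i; have := gR i; rewrite inE.
have half_eq : forall i j : 'I_(k.*2), g i = g j -> i./2 = j./2.
  move=> i j; apply: nth_enum_inj; apply: leq_trans kR.
    have := ltn_ord i; clear; rewrite -[X in X < _](odd_double_half i); case: (odd i) => /=; rewrite ?ltn_double; lia.
  have := ltn_ord j; clear; rewrite -[X in X < _](odd_double_half j); case: (odd j) => /=; rewrite ?ltn_double; lia.
apply/existsP; exists [ffun i => f i]; apply/andP; split.
  apply/injectiveP => i j; rewrite !ffunE /f => e.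
  apply: val_inj => /=.
  rewrite -(odd_double_half i) -(odd_double_half j).
  move: e; case oi: (odd i); case oj: (odd j) => e.
  - by rewrite (half_eq _ _ (inj _ _ e)).
  - exfalso; have := gRP i; have := gRP j; rewrite -e inv.
    move=> /andP[_ h1] /andP[_ h2]; move: h1 h2; clear; lia.
  - exfalso; have := gRP i; have := gRP j; rewrite e inv.
    move=> /andP[_ h1] /andP[_ h2]; move: h1 h2; clear; lia.
  - by rewrite (half_eq _ _ e).
apply/forallP => i; apply/forallP => j; apply/implyP => /andP[/eqP hij nij].
rewrite !ffunE /f.
have gij : g i = g j by rewrite /g hij.
have odd_ne : odd i != odd j.
  apply: contra nij => /eqP oe; apply/eqP; apply: val_inj => /=.
  by rewrite -(odd_double_half i) -(odd_double_half j) oe hij.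
have hE := valid_E v (proj1 (andP (gRP i))).
case: (odd i) odd_ne; case: (odd j) => //= _; rewrite -gij //.
by rewrite Esym.
Qed.

Lemma greedy k : forall (m : {ffun 'I_n -> 'I_n}) (R : {set 'I_n}),
  valid setT m -> #|R| = k -> (forall v, v \in R -> m v = v) ->
  (forall v, v \in R -> msize m + k.*2 <= #|Nb v|) ->
  exists m', valid setT m' /\ msize m' = msize m + k.*2.
Proof.
elim: k => [|k IH] m R v hR hRu hdeg; first by exists m; rewrite addn0.
have : 0 < #|R| by rewrite hR.
case/card_gt0P => x xR.
pose X := [set z | m z != z] :|: R.
have hX : #|X| <= msize m + k.+1 by rewrite -hR msizeE; apply: leq_card_setU.
have : 0 < #|Nb x :\: X|.
  have := cardsID X (Nb x); have := hdeg x xR; have := subset_leq_card (subsetIr (Nb x) X).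
  move: hX; clear; rewrite doubleS; lia.
case/card_gt0P => u; rewrite !inE negb_or => /andP[/andP[/negPn/eqP mu uR] exu].
have [m1 [v1 s1 e1]] := aug1 v (hRu x xR) mu exu (in_setT _) (in_setT _).
have [|||m' [v' s']] := IH m1 (R :\ x) v1.
- by move: hR; rewrite (cardsD1 x) xR add1n => -[].
- move=> z; rewrite !inE => /andP[zx zR]; rewrite e1 ?hRu //.
  by apply: contraNneq uR => <-.
- move=> z; rewrite !inE => /andP[zx zR]; rewrite s1; have := hdeg z zR.
  by rewrite doubleS; lia.
by exists m'; split => //; rewrite s' s1 doubleS; lia.
Qed.

Lemma arcs_splitl (S1 S2 X : {set 'I_n}) : arcs S1 S2 = arcs (S1 :&: X) S2 + arcs (S1 :\: X) S2.
Proof.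
rewrite /arcs -(cardsID [set p : 'I_n * 'I_n | p.1 \in X]); congr (_ + _); apply: eq_card => -[a b]; rewrite !inE /=.
  by case: (a \in X); rewrite ?andbF ?andbT.
by case: (a \in X); rewrite ?andbF ?andbT.
Qed.

Lemma arcs_splitr (S1 S2 X : {set 'I_n}) : arcs S1 S2 = arcs S1 (S2 :&: X) + arcs S1 (S2 :\: X).
Proof.
rewrite /arcs -(cardsID [set p : 'I_n * 'I_n | p.2 \in X]); congr (_ + _); apply: eq_card => -[a b]; rewrite !inE /=.
  by case: (b \in X); rewrite ?andbF ?andbT.
by case: (b \in X); rewrite ?andbF ?andbT.
Qed.

Lemma arcs_sub (S1 S2 S1' S2' : {set 'I_n}) : S1 \subset S1' -> S2 \subset S2' -> arcs S1 S2 <= arcs S1' S2'.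
Proof.
move=> /subsetP h1 /subsetP h2; apply: subset_leq_card; apply/subsetP => -[a b]; rewrite !inE /=.
by case/and3P => -> /h1 -> /h2 ->.
Qed.

Lemma arcs_all : #|E| = arcs setT setT.
Proof. by apply: eq_card => p; rewrite !inE /= ?andbT. Qed.

Lemma arcs_eq0 (S1 S2 : {set 'I_n}) : (forall x y, x \in S1 -> y \in S2 -> (x, y) \notin E) -> arcs S1 S2 = 0.
Proof.
move=> h; apply/eqP; rewrite cards_eq0; apply/eqP/setP => -[a b]; rewrite !inE /=.
by apply/negbTE/and3P => -[e /h ha /ha]; rewrite e.
Qed.

Lemma arcs_le (S1 S2 : {set 'I_n}) k : (forall v, v \in S1 -> #|Nb v :&: S2| <= k) -> arcs S1 S2 <= #|S1| * k.
Proof.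
move=> h; rewrite arcs_sum -sum_nat_const; exact: leq_sum.
Qed.

Lemma arcs_ge (S1 S2 : {set 'I_n}) k : (forall v, v \in S1 -> k <= #|Nb v :&: S2|) -> #|S1| * k <= arcs S1 S2.
Proof.
move=> h; rewrite arcs_sum -sum_nat_const; exact: leq_sum.
Qed.

Lemma deg_in (W : {set 'I_n}) v : v \in W -> #|Nb v :&: W| <= #|W| - 1.
Proof.
move=> vW.
have : #|Nb v :&: W| < #|W|.
  apply: proper_card; rewrite properEneq subsetIr andbT.
  apply/eqP => e; have : v \in Nb v :&: W by rewrite e.
  by rewrite !inE (negbTE (Eirr v)).
lia.
Qed.


End Graph.
Lemma simpleP n (E : {set 'I_n * 'I_n}) :
  simple_graph E -> (forall x y, ((x,y) \in E) = ((y,x) \in E)) /\ (forall x, (x,x) \notin E).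
Proof.
case/andP => /forallP h1 /forallP h2; split => [x y|x]; last exact: h2.
by move/forallP: (h1 x) => /(_ y) /eqP.
Qed.

Lemma transport n (E : {set 'I_n * 'I_n}) (x0 : 'I_n) l t m (T : {set 'I_n}) :
  (forall x y, ((x,y) \in E) = ((y,x) \in E)) -> (forall x, (x,x) \notin E) ->
  0 < l -> 0 < t -> ~~ contains E (Kbip l t) -> #|T| <= m ->
  arcs E T T <= (ex m [:: Kbip l t]).*2.
Proof.
move=> Esym Eirr l0 t0 nK Tm.
pose c := #|T|.
pose ev := fun k : 'I_m => nth x0 (enum T) k.
pose E' := [set p : 'I_m * 'I_m | [&& p.1 < c, p.2 < c & (ev p.1, ev p.2) \in E]].
have E'sym : forall x y, ((x,y) \in E') = ((y,x) \in E').
  by move=> x y; rewrite !inE /= Esym; case: (x < c); case: (y < c).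
have E'irr : forall x, (x,x) \notin E' by move=> x; rewrite !inE /= (negbTE (Eirr _)) !andbF.
have evinj : forall i j : 'I_m, i < c -> j < c -> ev i = ev j -> i = j.
  by move=> i j hi hj e; apply: val_inj; apply: (nth_enum_inj hi hj e).
have nK' : ~~ contains E' (Kbip l t).
  apply: contra nK => /existsP[f /andP[/injectiveP finj /forallP fE]].
  have fc : forall i, f i < c.
    move=> i.
    have [j pij] : exists j, @pe (Kbip l t) i j.
      case: (ltnP i l) => hi.
        have hl : l < l + t by lia.
        by exists (Ordinal hl) => /=; rewrite hi ltnn.
      have h0 : 0 < l + t by lia.
      by exists (Ordinal h0) => /=; rewrite l0 ltnNge hi.
    by move/forallP: (fE i) => /(_ j); rewrite pij /= inE => /andP[].
  apply/existsP; exists [ffun i => ev (f i)]; apply/andP; split.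
    by apply/injectiveP => i j; rewrite !ffunE => /(evinj _ _ (fc i) (fc j)) /finj.
  apply/forallP => i; apply/forallP => j; apply/implyP => pij; rewrite !ffunE.
  by move/forallP: (fE i) => /(_ j); rewrite pij /= inE => /and3P[_ _].
have sE' : simple_graph E'.
  apply/andP; split; apply/forallP => x; last exact: E'irr.
  by apply/forallP => y; rewrite E'sym.
have hex : nedges E' <= ex m [:: Kbip l t].
  rewrite /ex; apply: leq_bigmax_cond.
  by rewrite /= sE' nK'.
have -> : arcs E T T = #|E'|.
  rewrite /arcs -(card_in_imset (f := fun p : 'I_m * 'I_m => (ev p.1, ev p.2))).
    apply: eq_card => -[a b]; rewrite !inE /=.
    apply/andP/imsetP.
      case=> ab /andP[aT bT].
      have ia : index a (enum T) < m by apply: leq_trans Tm; rewrite cardE index_mem mem_enum.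
      have ib : index b (enum T) < m by apply: leq_trans Tm; rewrite cardE index_mem mem_enum.
      exists (Ordinal ia, Ordinal ib); last by rewrite /ev /= !nth_index ?mem_enum.
      by rewrite inE /= /ev /c !cardE !index_mem !mem_enum aT bT !nth_index ?mem_enum.
    case=> -[i j]; rewrite inE /= => /and3P[hi hj he] [-> ->]; split => //.
    by rewrite /ev !nth_enum_in.
  move=> [i1 j1] [i2 j2]; rewrite !inE /= => /and3P[hi1 hj1 _] /and3P[hi2 hj2 _] [e1 e2].
  by rewrite (evinj _ _ hi1 hi2 e1) (evinj _ _ hj1 hj2 e2).
by rewrite -(nedges_arcs E'sym E'irr); move: hex; clear; lia.
Qed.

Section Main.
Variables (n : nat) (E : {set 'I_n * 'I_n}) (l t s : nat) (x0 : 'I_n).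
Hypothesis Esym : forall x y, ((x,y) \in E) = ((y,x) \in E).
Hypothesis Eirr : forall x, (x,x) \notin E.
Hypothesis hl : 3 <= l.
Hypothesis hlt : l <= t.
Hypothesis hls : l.+1 <= s.
Hypothesis nK : ~~ contains E (Kbip l t).
Hypothesis nM : ~~ contains E (Mmatch s.+1).

Fact B_key : unit. Proof. exact: tt. Qed.
Definition B : {set 'I_n} := locked_with B_key [set v | s.*2.+2 <= #|Nb E v|].
Lemma inB v : (v \in B) = (s.*2.+2 <= #|Nb E v|).
Proof. by rewrite /B locked_withE inE. Qed.
Definition m0 : {ffun 'I_n -> 'I_n} := [ffun x => x].
Definition mx := [arg max_(m > m0 | valid E (~: B) m) msize m].

Lemma m0_valid : valid E (~: B) m0.
Proof. by apply/forallP => x; rewrite ffunE eqxx. Qed.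

Lemma mx_spec : valid E (~: B) mx /\ forall m, valid E (~: B) m -> msize m <= msize mx.
Proof. by rewrite /mx; case: (arg_maxnP (@msize n) m0_valid) => m vm hm; split. Qed.

Lemma mx_valid : valid E (~: B) mx. Proof. exact: (proj1 mx_spec). Qed.
Lemma mx_max m : valid E (~: B) m -> msize m <= msize mx. Proof. exact: (proj2 mx_spec). Qed.

Fact I_key : unit. Proof. exact: tt. Qed.
Definition I' : {set 'I_n} := locked_with I_key [set v | (v \notin B) && (mx v == v)].
Lemma inI v : (v \in I') = (v \notin B) && (mx v == v).
Proof. by rewrite /I' locked_withE inE. Qed.

Lemma indep x y : x \in I' -> y \in I' -> (x, y) \notin E.
Proof.
rewrite !inI => /andP[xB /eqP mxx] /andP[yB /eqP myy]; apply/negP => exy.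
have xB' : x \in ~: B by rewrite in_setC.
have yB' : y \in ~: B by rewrite in_setC.
have [m' [v' s' _]] := aug1 Esym Eirr mx_valid mxx myy exy xB' yB'.
by have := mx_max v'; rewrite s'; lia.
Qed.

Definition cond z := #|Nb E z :&: I'| <= 1.

Lemma cond_or x : mx x != x -> cond x || cond (mx x).
Proof.
move=> hx; apply/negPn/negP; rewrite negb_or /cond -!ltnNge => /andP[h1 h2].
have : 0 < #|Nb E x :&: I'| by lia.
case/card_gt0P => a; rewrite in_setI inI inE => /andP[exa /andP[aB /eqP ma]].
have : 0 < #|(Nb E (mx x) :&: I') :\ a|.
  by move: h2; rewrite (cardsD1 a); case: (a \in _); lia.
case/card_gt0P => c; rewrite in_setD1 in_setI inI inE => /andP[ca /andP[eyc /andP[cB /eqP mc]]].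
have aB' : a \in ~: B by rewrite in_setC.
have cB' : c \in ~: B by rewrite in_setC.
have ac : a != c by rewrite eq_sym.
have [m' [v' s']] := aug2 Esym mx_valid (erefl (mx x)) hx ma mc ac exa eyc aB' cB'.
by have := mx_max v'; rewrite s'; lia.
Qed.
Lemma mx_inv x : mx (mx x) = x. Proof. exact: valid_inv mx_valid x. Qed.
Lemma mx_inj : injective mx. Proof. exact: valid_inj mx_valid. Qed.

Fact P_key : unit. Proof. exact: tt. Qed.
Definition P : {set 'I_n} := locked_with P_key [set x | (mx x != x) && (cond x && (cond (mx x) ==> (x < mx x)))].
Lemma inP x : (x \in P) = (mx x != x) && (cond x && (cond (mx x) ==> (x < mx x))).
Proof. by rewrite /P locked_withE inE. Qed.
Fact W_key : unit. Proof. exact: tt. Qed.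
Definition W' : {set 'I_n} := locked_with W_key [set x | (mx x != x) && (x \notin P)].
Lemma inW x : (x \in W') = (mx x != x) && (x \notin P).
Proof. by rewrite /W' locked_withE inE. Qed.

Lemma P_mate x : mx x != x -> (mx x \in P) = (x \notin P).
Proof.
move=> hx.
have hy : x != mx x by rewrite eq_sym.
have := cond_or hx.
rewrite !inP mx_inv hx hy /=.
have nxy : (x : nat) != mx x by apply: contra hx => /eqP e; apply/eqP; apply: val_inj.
case: (cond x); case: (cond (mx x)) => //= _.
by move: nxy; case: ltngtP.
Qed.

Lemma P_matched x : x \in P -> mx x != x.
Proof. by rewrite inP => /andP[]. Qed.
Lemma W_matched x : x \in W' -> mx x != x.
Proof. by rewrite inW => /andP[]. Qed.

Lemma mate_W x : x \in W' -> mx x \in P.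
Proof. by rewrite inW => /andP[hx hP]; rewrite P_mate. Qed.
Lemma mate_P x : x \in P -> mx x \in W'.
Proof.
move=> hP; have hx := P_matched hP.
by rewrite inW P_mate // hP mx_inv eq_sym hx.
Qed.

Lemma card_PW : #|P| = #|W'|.
Proof.
apply/eqP; rewrite eqn_leq; apply/andP; split.
  rewrite -(card_imset _ mx_inj); apply: subset_leq_card; apply/subsetP => y /imsetP[x xP ->].
  exact: mate_P.
rewrite -(card_imset _ mx_inj); apply: subset_leq_card; apply/subsetP => y /imsetP[x xW ->].
exact: mate_W.
Qed.

Lemma matchedE : [set x | mx x != x] = P :|: W'.
Proof.
apply/setP => x; rewrite inE in_setU inW.
case: (boolP (mx x != x)) => hx /=; first by case: (x \in P).
have : x \notin P by apply: contra hx; apply: P_matched.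
by move/negbTE => ->.
Qed.

Lemma PW_disj : P :&: W' = set0.
Proof. by apply/setP => x; rewrite !inE inW; case: (x \in P); rewrite ?andbF. Qed.

Lemma msize_W : msize mx = #|W'|.*2.
Proof. by rewrite msizeE matchedE cardsU PW_disj cards0 subn0 card_PW addnn. Qed.

Lemma B_unmatched v : v \in B -> mx v = v.
Proof.
move=> vB; apply/eqP; apply/negPn/negP => hv.
by have := valid_A mx_valid hv; rewrite in_setC vB.
Qed.

Lemma bnu : #|B| + #|W'| <= s.
Proof.
rewrite leqNgt; apply/negP => h.
case: (ltnP s #|W'|) => hw.
  move/negP: nM; apply; apply: (match_contains Esym x0 mx_valid).
  by rewrite msize_W leq_double.
pose r := s.+1 - #|W'|.
have rb : r <= #|B| by rewrite /r; lia.
pose R := [set x in take r (enum B)].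
have hR : #|R| = r.
  have -> : #|R| = #|take r (enum B)| by apply: eq_card => x; rewrite inE.
  by rewrite (card_uniqP _) ?take_uniq ?enum_uniq // size_takel // -cardE.
have RB : forall v, v \in R -> v \in B by move=> v; rewrite inE => /mem_take; rewrite mem_enum.
have hdeg : forall v, v \in R -> msize mx + r.*2 <= #|Nb E v|.
  move=> v vR; have := RB v vR; rewrite inB msize_W /r; lia.
have [m' [v' s']] := greedy Esym Eirr (valid_sub (subsetT _) mx_valid) hR
   (fun v vR => B_unmatched (RB v vR)) hdeg.
move/negP: nM; apply; apply: (match_contains Esym x0 v').
by rewrite s' msize_W /r; lia.
Qed.

Definition W := B :|: W'.

Lemma BW_disj : B :&: W' = set0.
Proof.
apply/setP => x; rewrite !inE; apply/negbTE/andP => -[xB xW].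
by have := W_matched xW; rewrite B_unmatched // eqxx.
Qed.

Lemma card_W : #|W| = #|B| + #|W'|.
Proof. by rewrite /W cardsU BW_disj cards0 subn0. Qed.

Lemma cW_P : ~: W :&: P = P.
Proof.
apply/setIidPr/subsetP => x xP; rewrite !inE negb_or inW xP andbF andbT.
by apply/negP => xB; have := P_matched xP; rewrite B_unmatched // eqxx.
Qed.

Lemma cW_I : ~: W :\: P = I'.
Proof.
apply/setP => x; rewrite in_setD in_setC in_setU inI inW.
case: (boolP (x \in P)) => xP /=.
  by rewrite (negbTE (P_matched xP)) andbF.
by rewrite andbT negb_or; case: (x \in B); rewrite //= negbK.
Qed.

Lemma P_I_disj : P :&: I' = set0.
Proof.
apply/setP => x; rewrite !inE inI; apply/negbTE/andP => -[xP /andP[_ /eqP e]].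
by have := P_matched xP; rewrite e eqxx.
Qed.

Lemma arcs_cW : arcs E (~: W) (~: W) <= arcs E P P + (#|P|).*2.
Proof.
rewrite (arcs_splitl E _ _ P) cW_P cW_I.
rewrite (arcs_splitr E P _ P) cW_P cW_I.
rewrite (arcs_splitr E I' _ P) cW_P cW_I.
rewrite (arcs_eq0 (S1 := I') (S2 := I')); last by move=> x y; apply: indep.
rewrite (arcs_sym Esym I' P).
have : arcs E P I' <= #|P| * 1.
  apply: arcs_le => v vP; have := vP; rewrite inP => /and3P[_ + _]; by rewrite /cond.
lia.
Qed.

Lemma arcs_T : 0 < #|W'| -> exists T : {set 'I_n},
  #|T| <= (#|W'|).*2 - 1 /\ arcs E P P + (#|W'| - 1).*2 <= arcs E T T.
Proof.
case/card_gt0P => x1 x1W.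
pose W1 := W' :\ x1.
have hW1 : #|W1| = #|W'| - 1 by rewrite /W1 (cardsD1 x1 W') x1W; lia.
have W1P : W1 :&: P = set0.
  apply/setP => x; rewrite !inE inW; apply/negbTE; case: (x \in P); by rewrite ?andbF.
exists (P :|: W1); split.
  have := leq_card_setU P W1; rewrite card_PW hW1 => /leqifP; case: ifP => _ h; lia.
have e1 : (P :|: W1) :&: P = P by apply/setIidPr; apply: subsetUl.
have e2 : (P :|: W1) :\: P = W1.
  apply/setP => x; rewrite !inE; case: (boolP (x \in P)) => xP //=.
  apply/esym/negbTE/andP => -[_ xW]; by move: xW; rewrite inW xP andbF.
rewrite (arcs_splitl E (P :|: W1) _ P) e1 e2 (arcs_splitr E P (P :|: W1) P) e1 e2.
have h1 : arcs E W1 P <= arcs E W1 (P :|: W1) by apply: arcs_sub => //; apply: subsetUl.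
have h2 : #|W1| * 1 <= arcs E W1 P.
  apply: arcs_ge => v; rewrite in_setD1 => /andP[_ vW].
  rewrite card_gt0; apply/set0Pn; exists (mx v); rewrite !inE mate_W // andbT.
  exact: valid_E mx_valid (W_matched vW).
rewrite (arcs_sym Esym P W1).
lia.
Qed.

Lemma CN_bound : forall L : {set 'I_n}, #|L| = l -> #|CN E L| < t.
Proof. by move=> L hL; apply: (CN_small Esym Eirr x0 nK hL). Qed.

Lemma main_count : #|E| <= #|W| * (l - 1) + ((n - #|W|) * (l - 1)).*2
   + ((t - 1) * 'C(#|W|, l)).*2 + arcs E (~: W) (~: W).
Proof.
have l0 : 0 < l by lia.
have cWc : #|~: W| = n - #|W| by have := cardsC W; rewrite card_ord; lia.
rewrite arcs_all.
rewrite (arcs_splitl E _ _ W) setTI setTD.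
rewrite (arcs_splitr E W _ W) (arcs_splitr E (~: W) _ W) setTI setTD.
rewrite (arcs_sym Esym W (~: W)).
pose C := fun v => 'C(#|Nb E v :&: W|, l).
have hA : forall S : {set 'I_n}, arcs E S W <= #|S| * (l - 1) + \sum_(v in S) C v.
  move=> S; rewrite arcs_sum -sum_nat_const -big_split /=; apply: leq_sum => v _.
  exact: binom_lin.
have hS : \sum_(v in W) C v + \sum_(v in ~: W) C v <= (t - 1) * 'C(#|W|, l).
  apply: leq_trans (count_lsets W CN_bound).
  rewrite (bigID (mem W) predT) /=.
  apply: leq_add; apply: eq_leq; apply: eq_bigl => v; by rewrite ?inE.
have := hA W; have := hA (~: W); rewrite cWc.
lia.
Qed.

Lemma arcs_decomp (S : {set 'I_n}) :
  #|E| = arcs E S S + (arcs E (~: S) S).*2 + arcs E (~: S) (~: S).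
Proof.
rewrite arcs_all (arcs_splitl E _ _ S) setTI setTD.
rewrite (arcs_splitr E S _ S) (arcs_splitr E (~: S) _ S) setTI setTD.
rewrite (arcs_sym Esym S (~: S)); lia.
Qed.

Lemma bin2E x : 'C(x, 2) * 2 = x * (x - 1).
Proof. by have := mul_bin_diag x 1; rewrite bin1; lia. Qed.

Lemma nedges_le_vc : #|B| <= l - 2 -> nedges E <= (l - 2) * n + (s.*2) * s.*2.+1.
Proof.
move=> hb.
pose C := ~: I'.
have e2 := nedges_arcs Esym Eirr.
have h1 : #|E| <= (arcs E C setT).*2.
  rewrite arcs_all (arcs_splitl E _ _ C) setTI setTD setCK.
  rewrite (arcs_splitr E I' _ C) setTI setTD setCK.
  rewrite (arcs_eq0 (S1 := I') (S2 := I')); last by move=> x y; apply: indep.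
  rewrite (arcs_sym Esym I' C).
  have : arcs E C I' <= arcs E C setT by apply: arcs_sub => //; apply: subsetT.
  lia.
have CB : C :&: B = B.
  apply/setIidPr/subsetP => v vB; rewrite in_setC inI vB.
  done.
have CBm : #|C :\: B| <= (#|W'|).*2.
  rewrite -msize_W msizeE; apply: subset_leq_card; apply/subsetP => v.
  rewrite in_setD in_setC inI !inE => /andP[vB]; by rewrite vB.
have h2 : arcs E C setT <= #|B| * n + #|C :\: B| * s.*2.+1.
  rewrite (arcs_splitl E _ _ B) CB.
  apply: leq_add.
    apply: arcs_le => v _; have := max_card (Nb E v :&: setT); rewrite card_ord; done.
  apply: arcs_le => v; rewrite in_setD => /andP[vB _].
  rewrite setIT; move: vB; rewrite inB; lia.
have hw := bnu.
have : #|B| * n <= (l - 2) * n by apply: leq_mul.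
have : #|C :\: B| * s.*2.+1 <= s.*2 * s.*2.+1 by apply: leq_mul => //; lia.
lia.
Qed.

Lemma case_vc : #|B| <= l - 2 -> 2 * 'C(3 * s, 2) <= n ->
  nedges E + 'C(l, 2) <= (l - 1) * n.
Proof.
move=> hb hn.
have h := nedges_le_vc hb.
have c1 := bin2E (3 * s).
have c2 := bin2E l.
have ll : l * (l - 1) <= s * s by apply: leq_mul; lia.
have : (l - 1) * n = (l - 2) * n + n by rewrite -mulSnr; congr (_ * _); lia.
nia.
Qed.

Lemma arith_sp ne E2 A1 A2 C2 k m : E2 = A1 + A2.*2 -> ne * 2 = E2 -> A1 <= k * (k - 1) ->
  A2 <= m * k -> C2 * 2 = k.+1 * k -> ne + C2 <= k * (m + k).
Proof.
move=> d e a1 a2 c.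
have h : forall j, j * (j - 1) + j = j * j by case=> // j; rewrite subSS subn0 mulnS; lia.
have := h k.
nia.
Qed.

Lemma P_empty : #|W'| = 0 -> arcs E (~: W) (~: W) = 0.
Proof.
move=> h0.
have P0 : P = set0 by apply/eqP; rewrite -cards_eq0 card_PW h0.
have := arcs_cW; rewrite P0 cards0.
have -> : arcs E set0 set0 = 0 by apply: arcs_eq0 => x y; rewrite inE.
lia.
Qed.

Lemma case_special : #|W| = l - 1 -> l - 1 <= #|B| -> nedges E + 'C(l, 2) <= (l - 1) * n.
Proof.
move=> hw hb.
have h0 : #|W'| = 0 by move: hw hb; rewrite card_W; lia.
have e2 := nedges_arcs Esym Eirr.
have d := arcs_decomp W.
rewrite (P_empty h0) in d.
have a1 : arcs E W W <= #|W| * (#|W| - 1) by apply: arcs_le => v vW; apply: (deg_in Eirr vW).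
have a2 : arcs E (~: W) W <= #|~: W| * #|W|.
  by apply: arcs_le => v _; apply: subset_leq_card; apply: subsetIr.
have cWc : #|~: W| = n - #|W| by have := cardsC W; rewrite card_ord; lia.
have wn : #|W| <= n by have := max_card W; rewrite card_ord.
have c2 := bin2E l.
rewrite cWc hw in a1 a2.
have hl1 : l = (l - 1).+1 by lia.
have hn : n = (n - (l - 1)) + (l - 1) by move: wn; rewrite hw; lia.
rewrite [in X in _ <= X]hn.
have c2' : 'C(l, 2) * 2 = (l - 1).+1 * (l - 1) by rewrite -hl1.
rewrite addn0 in d.
exact: (arith_sp d e2 a1 a2 c2').
Qed.

Lemma case_gen : l <= #|W| -> l - 1 <= #|B| ->
  nedges E + 'C(l, 2) <= (t - 1) * 'C(s, l) + (l - 1) * n + ex (2 * (s - l) + 1) [:: Kbip l t].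
Proof.
move=> hw hb.
set X := ex _ _.
have hcW : arcs E (~: W) (~: W) <= X.*2 + 2.
  case: (posnP #|W'|) => h0; first by rewrite (P_empty h0).
  have [T [hT hPT]] := arcs_T h0.
  have hbn := bnu.
  have hT' : #|T| <= 2 * (s - l) + 1 by lia.
  have l0 : 0 < l by lia.
  have t0 : 0 < t by lia.
  have := transport x0 Esym Eirr l0 t0 nK hT'.
  have := arcs_cW.
  rewrite card_PW.
  lia.
have mc := main_count.
have e2 := nedges_arcs Esym Eirr.
have c2 := bin2E l.
have wn : #|W| <= n by have := max_card W; rewrite card_ord.
have ws : #|W| <= s by rewrite card_W; exact: bnu.
have hsum : #|W| * (l - 1) + (n - #|W|) * (l - 1) = n * (l - 1) by rewrite -mulnDl subnKC.
have hCle : (t - 1) * 'C(#|W|, l) <= (t - 1) * 'C(s, l) by apply: leq_mul => //; apply: leq_bin2l.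
have Cs2 : 2 <= 'C(s, l).
  have : 'C(l.+1, l) <= 'C(s, l) by apply: leq_bin2l.
  rewrite binSn; lia.
case: (ltngtP #|W| l) => hwl.
- lia.
- have hwl2 : l * (l - 1) + 2 <= #|W| * (l - 1).
    have : l.+1 * (l - 1) <= #|W| * (l - 1) by apply: leq_mul.
    rewrite mulSn; lia.
  move: mc hcW hsum hCle hwl2 e2 c2.
  move: (#|W| * (l - 1)) ((n - #|W|) * (l - 1)) ((t - 1) * 'C(#|W|, l)) ((t - 1) * 'C(s, l)) => a b p q.
  rewrite [n * _]mulnC.
  move: (l * (l - 1)) ((l - 1) * n) => L N.
  lia.
- rewrite hwl binn muln1 in mc hsum.
  have : 2 * (t - 1) <= (t - 1) * 'C(s, l) by rewrite mulnC leq_mul.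
  move: mc hcW hsum e2 c2.
  move: (l * (l - 1)) ((n - l) * (l - 1)) ((t - 1) * 'C(s, l)) => L b q.
  rewrite [n * _]mulnC.
  move: ((l - 1) * n) => N.
  lia.
Qed.


End Main.

Theorem corollary3p6 (l t s n : nat) :
  3 <= l -> l <= t -> l.+1 <= s -> 2 * 'C(3 * s, 2) <= n ->
  ex n [:: Kbip l t; Mmatch s.+1] + 'C(l, 2) <=
    (t - 1) * 'C(s, l) + (l - 1) * n + ex (2 * (s - l) + 1) [:: Kbip l t].
Proof.
move=> hl hlt hls hn.
have b2 : forall x, 'C(x, 2) * 2 = x * (x - 1).
  by move=> x; have := mul_bin_diag x 1; rewrite bin1; clear; lia.
have n0 : 0 < n.
  have : 0 < 'C(3 * s, 2) by rewrite bin_gt0; lia.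
  lia.
have x0 : 'I_n by exact: Ordinal n0.
have key : forall E : {set 'I_n * 'I_n},
    simple_graph E && all (fun H => ~~ contains E H) [:: Kbip l t; Mmatch s.+1] ->
    nedges E + 'C(l, 2) <= (t - 1) * 'C(s, l) + (l - 1) * n + ex (2 * (s - l) + 1) [:: Kbip l t].
  move=> E /andP[sE]; rewrite /= andbT => /andP[nK nM].
  have [Esym Eirr] := simpleP sE.
  case: (leqP #|B E s| (l - 2)) => hb.
    have := case_vc x0 Esym Eirr hl hlt hls nK nM hb hn; nia.
  have hb' : l - 1 <= #|B E s| by lia.
  have hWB : #|B E s| <= #|W E s| by apply: subset_leq_card; rewrite /W; apply: subsetUl.
  case: (eqVneq #|W E s| (l - 1)) => hw.
    have := case_special Esym Eirr hl hlt hls nK nM hw hb'; nia.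
  have hw' : l <= #|W E s| by lia.
  exact: (case_gen x0 Esym Eirr hl hlt hls nK nM hw' hb').
have : ex n [:: Kbip l t; Mmatch s.+1] <= (t - 1) * 'C(s, l) + (l - 1) * n + ex (2 * (s - l) + 1) [:: Kbip l t] - 'C(l, 2).
  rewrite [ex n _]/ex; apply/bigmax_leqP => E hE.
  have := key E hE; nia.
have : 'C(l, 2) <= (l - 1) * n.
  have := b2 l.
  have : l <= n.
    have := b2 (3 * s).
    have : 3 * s <= 3 * s * (3 * s - 1) by apply: leq_pmulr; lia.
    lia.
  nia.
nia.
Qed.
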